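(* Let $C, C' \in M_n(\mathbb{C})$ be contractions. Then $\mathcal{A}(C)$ is unitarily similar to $\mathcal{A}(C')$ if and only if $C$ and $C'$ are unitarily similar.
   Context: A contraction is a matrix $C$ with operator norm $\|C\|\le 1$. For a contraction $C\in M_n(\mathbb{C})$ put $D_C := I-C^*C\ge 0$ and $d:=\operatorname{rank} D_C$. Let $B_C$ denote the $d\times n$ matrix (with respect to some orthonormal basis of $\operatorname{Im} D_C$) of the map $\mathbb{C}^n\to\operatorname{Im} D_C$ that acts on $\operatorname{Im} D_C$ as $D_C^{1/2}$ and sends $(\operatorname{Im} D_C)^\perp$ to $0$; thus $B_C^*B_C=D_C$ and $B_C$ has full row rank $d$. The associated partial isometry of $C$ is the $(d+n)\times(d+n)$ matrix $\mathcal{A}(C):=\begin{bmatrix}0&B_C\\0&C\end{bmatrix}$ (its unitary similarity class does not depend on the choice of orthonormal basis of $\operatorname{Im}D_C$). *)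

(* Defs.v *)
From HB Require Import structures.
From mathcomp Require Import all_boot all_order all_algebra.
From mathcomp Require Import complex.
From mathcomp Require Import reals.
Set Implicit Arguments. Unset Strict Implicit. Unset Printing Implicit Defensive.
Import Order.TTheory GRing.Theory Num.Theory.
Local Open Scope ring_scope.

Definition adjmx (F : numClosedFieldType) (m p : nat) (A : 'M[F]_(m, p)) : 'M[F]_(p, m) :=
  (map_mx Num.conj A)^T.

(* Contraction: operator norm <= 1, i.e. ||C v||^2 <= ||v||^2 for every vector v. *)
Definition contraction (F : numClosedFieldType) (n : nat) (C : 'M[F]_n) : Prop :=
  forall v : 'cV[F]_n,
    (adjmx (C *m v) *m (C *m v)) 0 0 <= (adjmx v *m v) 0 0.

Definition psd (F : numClosedFieldType) (n : nat) (S : 'M[F]_n) : Prop :=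
  adjmx S = S /\ forall v : 'cV[F]_n, 0 <= (adjmx v *m S *m v) 0 0.

Definition defect (F : numClosedFieldType) (n : nat) (C : 'M[F]_n) : 'M[F]_n :=
  1%:M - adjmx C *m C.

(* B is "B_C": the d x n matrix (d = rank D_C), with respect to some orthonormal
   basis (columns of V) of Im D_C, of the map acting as D_C^{1/2} (the PSD square
   root S of D_C).  Since S vanishes on (Im D_C)^perp and maps into Im D_C, that
   matrix is V^* S. *)
Definition is_BC (F : numClosedFieldType) (n : nat) (C : 'M[F]_n)
    (B : 'M[F]_(\rank (defect C), n)) : Prop :=
  exists (V : 'M[F]_(n, \rank (defect C))) (S : 'M[F]_n),
    [/\ adjmx V *m V = 1%:M,
        (V^T == (defect C)^T)%MS,         (* columns of V span Im D_C *)
        psd S, S *m S = defect C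
      & B = adjmx V *m S].

Definition assoc_pi (F : numClosedFieldType) (n : nat) (C : 'M[F]_n)
    (B : 'M[F]_(\rank (defect C), n)) : 'M[F]_(\rank (defect C) + n) :=
  block_mx 0 B 0 C.

(* Unitary similarity between square matrices of possibly different (a priori) sizes:
   there is U with U U^* = I and U^* U = I (forcing p = q) and U^* M U = M'. *)
Definition unit_sim (F : numClosedFieldType) (p q : nat) (M : 'M[F]_p) (M' : 'M[F]_q) : Prop :=
  exists U : 'M[F]_(p, q),
    [/\ U *m adjmx U = 1%:M, adjmx U *m U = 1%:M & adjmx U *m M *m U = M'].

(* Main.v *)
Require Import Defs.
From HB Require Import structures.
From mathcomp Require Import all_boot all_order all_algebra.
From mathcomp Require Import complex.
From mathcomp Require Import reals.
From mathcomp Require Import zify.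
Import Order.TTheory GRing.Theory Num.Theory.
Local Open Scope ring_scope.

Section Adj.
Variable F : numClosedFieldType.

Lemma adjmxM m n p (A : 'M[F]_(m, n)) (B : 'M[F]_(n, p)) :
  adjmx (A *m B) = adjmx B *m adjmx A.
Proof. by rewrite /adjmx map_mxM trmx_mul. Qed.

Lemma adjmxK m n (A : 'M[F]_(m, n)) : adjmx (adjmx A) = A.
Proof.
rewrite /adjmx map_trmx trmxK -map_mx_comp.
by apply/matrixP=> i j; rewrite !mxE /= conjCK.
Qed.

Lemma adjmx1 n : adjmx (1%:M : 'M[F]_n) = 1%:M.
Proof. by rewrite /adjmx map_mx1 trmx1. Qed.

Lemma adjmx0 m n : adjmx (0 : 'M[F]_(m, n)) = 0.
Proof. by rewrite /adjmx map_mx0 trmx0. Qed.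

Lemma adjmxB m n (A B : 'M[F]_(m, n)) : adjmx (A - B) = adjmx A - adjmx B.
Proof. by rewrite /adjmx map_mxB linearB. Qed.

Lemma adjmx_block m1 m2 n1 n2 (a : 'M[F]_(m1, n1)) (b : 'M[F]_(m1, n2))
   (c : 'M[F]_(m2, n1)) (d : 'M[F]_(m2, n2)) :
  adjmx (block_mx a b c d) = block_mx (adjmx a) (adjmx c) (adjmx b) (adjmx d).
Proof. by rewrite /adjmx map_block_mx tr_block_mx. Qed.

Lemma adjmx_inv n (A : 'M[F]_n) : adjmx (invmx A) = invmx (adjmx A).
Proof. by rewrite /adjmx map_invmx trmx_inv. Qed.

Lemma adj_eq0 m n (A : 'M[F]_(m, n)) : adjmx A *m A = 0 -> A = 0.
Proof.
move=> H; apply/matrixP=> i j; rewrite mxE.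
have /matrixP /(_ j j) := H; rewrite !mxE => Hs.
have Hs' : \sum_k A k j * (A k j)^* = 0.
  by rewrite -[RHS]Hs; apply: eq_bigr => l _; rewrite !mxE mulrC.
have := @psumr_eq0P _ _ xpredT (fun k => A k j * (A k j)^*) (fun l _ => mul_conjC_ge0 (A l j)) Hs' i isT.
by move/eqP; rewrite mul_conjC_eq0 => /eqP.
Qed.

Lemma adj_eq0' m n (A : 'M[F]_(m, n)) : A *m adjmx A = 0 -> A = 0.
Proof.
move=> H; rewrite -[A]adjmxK; have -> : adjmx A = 0; last by rewrite adjmx0.
by apply: adj_eq0; rewrite adjmxK.
Qed.

Lemma mxrank_adj m n (A : 'M[F]_(m, n)) : \rank (adjmx A) = \rank A.
Proof. by rewrite /adjmx mxrank_tr mxrank_map. Qed.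

Lemma mxrank_adjM m n (A : 'M[F]_(m, n)) : \rank (adjmx A *m A) = \rank A.
Proof.
have Hk : (kermx (adjmx A *m A) == kermx (adjmx A))%MS.
  apply/andP; split; apply/rV_subP => u /sub_kermxP Hu; apply/sub_kermxP.
    apply: adj_eq0'; by rewrite adjmxM adjmxK mulmxA -(mulmxA u) Hu mul0mx.
  by rewrite mulmxA Hu mul0mx.
have E1 := mxrank_ker (adjmx A *m A); have E2 := mxrank_ker (adjmx A).
rewrite (eqmxP Hk) E2 mxrank_adj in E1.
have h1 := rank_leq_col A; have h2 := rank_leq_col (adjmx A *m A).
lia.
Qed.
End Adj.

Lemma BC_gram {F : numClosedFieldType} {n} {C : 'M[F]_n} {B : 'M[F]_(\rank (defect C), n)} :
  is_BC B -> adjmx B *m B = defect C.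
Proof.
case=> V [S] [HV HVD [HSh _] HSS ->].
have HrS : \rank S^T = \rank (defect C)^T.
  by rewrite !mxrank_tr -HSS -{2}HSh mxrank_adjM.
have HDS : ((defect C)^T <= S^T)%MS by rewrite -HSS trmx_mul submxMl.
have HSD : (S^T <= (defect C)^T)%MS.
  by rewrite -(mxrank_leqif_sup HDS).2 HrS.
have HSV : (S^T <= V^T)%MS by rewrite (eqmxP HVD).
have ES := mulmxKpV HSV.
set M := S^T *m pinvmx V^T in ES.
have ES' : S = V *m M^T by rewrite -[S]trmxK -ES trmx_mul trmxK.
rewrite adjmxM adjmxK HSh; transitivity (S *m S); last by [].
rewrite -!mulmxA; congr (_ *m _).
by rewrite ES' !mulmxA -(mulmxA V) HV mulmx1.
Qed.

Lemma fwd (F : numClosedFieldType) n (C C' : 'M[F]_n)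
    (B : 'M[F]_(\rank (defect C), n)) (B' : 'M[F]_(\rank (defect C'), n)) :
  adjmx B *m B = defect C ->
  unit_sim (assoc_pi B) (assoc_pi B') -> unit_sim C C'.
Proof.
move=> HB [U [H1 H2 H3]].
have HAU : assoc_pi B *m U = U *m assoc_pi B'.
  by rewrite -H3 !mulmxA H1 mul1mx.
move: H1 HAU; rewrite /assoc_pi -(submxK U) adjmx_block !mulmx_block.
rewrite !mul0mx ?mulmx0 ?add0r ?addr0 (scalar_mx_block _ n) => H1 HAU.

have [_ _ _ Hd] := eq_block_mx H1.
have [Hc1 _ Hc2 Hd2] := eq_block_mx HAU.
set c := dlsubmx U in Hc1 Hc2 Hd Hd2; set d := drsubmx U in Hd Hd2.
have c0 : c = 0.
  have : (adjmx B *m B + adjmx C *m C) *m c = 0.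
    by rewrite mulmxDl -!mulmxA Hc1 Hc2 !mulmx0 addr0.
  by rewrite HB /defect subrK mul1mx.
rewrite c0 ?mul0mx ?mulmx0 add0r in Hd; rewrite c0 mul0mx add0r in Hd2.
exists d; split => //; first exact: mulmx1C.
by rewrite -mulmxA Hd2 mulmxA (mulmx1C Hd) mul1mx.
Qed.

Lemma gram_unit {F : numClosedFieldType} {n} {C : 'M[F]_n} {B : 'M[F]_(\rank (defect C), n)} :
  adjmx B *m B = defect C -> (B *m adjmx B) \in unitmx.
Proof.
move=> HB; rewrite -row_free_unit /row_free.
rewrite -{1}[B]adjmxK mxrank_adjM mxrank_adj.
apply/eqP/anti_leq; rewrite rank_leq_row /=.
by rewrite -{1}HB mxrankM_maxr.
Qed.

Lemma defect_sim (F : numClosedFieldType) n (C U : 'M[F]_n) :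
  U *m adjmx U = 1%:M -> adjmx U *m U = 1%:M ->
  defect (adjmx U *m C *m U) = adjmx U *m defect C *m U.
Proof.
move=> H1 H2; rewrite /defect !adjmxM adjmxK mulmxBr mulmxBl mulmx1 H2.
congr (_ - _); rewrite !mulmxA; congr (_ *m _).
by rewrite -(mulmxA _ U) H1 mulmx1.
Qed.

Lemma bwd (F : numClosedFieldType) n (C C' : 'M[F]_n)
    (B : 'M[F]_(\rank (defect C), n)) (B' : 'M[F]_(\rank (defect C'), n)) :
  adjmx B *m B = defect C -> adjmx B' *m B' = defect C' ->
  unit_sim C C' -> unit_sim (assoc_pi B) (assoc_pi B').
Proof.
move=> HB HB' [U [H1 H2 H3]].
set X := B *m U.
have HXY : adjmx X *m X = adjmx B' *m B'.
  rewrite HB'; transitivity (adjmx U *m defect C *m U).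
    by rewrite /X adjmxM mulmxA -(mulmxA (adjmx U)) HB.
  by rewrite -defect_sim // H3.
have HH : X *m adjmx X = B *m adjmx B.
  by rewrite /X adjmxM mulmxA -(mulmxA B) H1 mulmx1.
set H := B *m adjmx B.
have Hu := gram_unit HB; have Hu' := gram_unit HB'.
set H' := B' *m adjmx B' in Hu'.
have HHh : adjmx H = H by rewrite /H adjmxM adjmxK.
have HHh' : adjmx H' = H' by rewrite /H' adjmxM adjmxK.
set Qa := B' *m adjmx X *m invmx H.
have EQ : Qa *m X = B'.
  set P := adjmx X *m invmx H *m X.
  have XP : X *m (1%:M - P) = 0.
    by rewrite mulmxBr mulmx1 /P !mulmxA HH mulmxV // mul1mx subrr.
  have : adjmx (B' - Qa *m X) *m (B' - Qa *m X) = 0.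
    have -> : B' - Qa *m X = B' *m (1%:M - P).
      by rewrite mulmxBr mulmx1 /Qa /P !mulmxA.
    by rewrite adjmxM -mulmxA (mulmxA (adjmx B')) -HXY -mulmxA XP !mulmx0.
  by move/adj_eq0/eqP; rewrite subr_eq0 => /eqP.
have EQ2 : H' *m Qa = B' *m adjmx X.
  rewrite /Qa !mulmxA -(mulmxA B') -HXY !mulmxA -(mulmxA _ B U) -/X -(mulmxA (B' *m adjmx X) X) HH -mulmxA mulmxV ?mulmx1 //.
have EQa : Qa = invmx H' *m (B' *m adjmx X).
  by rewrite -EQ2 mulmxA mulVmx ?mul1mx.
have EadjQa : adjmx Qa = invmx H *m X *m adjmx B'.
  by rewrite /Qa adjmxM (@adjmxM _ _ _ _ B') adjmx_inv HHh adjmxK mulmxA.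
have EadjQa' : adjmx Qa = X *m adjmx B' *m invmx H'.
  by rewrite EQa adjmxM adjmx_inv HHh' adjmxM adjmxK.
exists (block_mx (adjmx Qa) 0 0 U).
rewrite adjmx_block adjmxK !adjmx0 /assoc_pi !mulmx_block.
rewrite !mul0mx ?mulmx0 ?add0r ?addr0 !(scalar_mx_block _ n).
split.
- congr block_mx => //.
  rewrite EadjQa /Qa.
  transitivity (invmx H *m (X *m (adjmx B' *m B') *m adjmx X) *m invmx H).
    by rewrite !mulmxA.
  rewrite -HXY.
  transitivity (invmx H *m (X *m adjmx X) *m (X *m adjmx X) *m invmx H).
    by rewrite !mulmxA.
  by rewrite HH -/H mulVmx // mul1mx mulmxV.
- congr block_mx => //.
  rewrite EadjQa' EQa.
  transitivity (invmx H' *m (B' *m (adjmx X *m X) *m adjmx B') *m invmx H').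
    by rewrite !mulmxA.
  rewrite HXY.
  transitivity (invmx H' *m H' *m H' *m invmx H').
    by rewrite /H' !mulmxA.
  by rewrite mulVmx // mul1mx mulmxV.
- congr block_mx => //.
  + by rewrite mul0mx.
  + by rewrite -mulmxA -/X EQ.
  + by rewrite mul0mx.
Qed.

Theorem mainTheorem1 (R : realType) (n : nat) (C C' : 'M[R[i]]_n)
    (B : 'M[R[i]]_(\rank (defect C), n)) (B' : 'M[R[i]]_(\rank (defect C'), n)) :
  contraction C -> contraction C' -> is_BC B -> is_BC B' ->
  (unit_sim (assoc_pi B) (assoc_pi B') <-> unit_sim C C').
Proof.
move=> _ _ hB hB'; have HB := BC_gram hB; have HB' := BC_gram hB'.
split; [exact: (@fwd _ n C C' B B' HB) | exact: (@bwd _ n C C' B B' HB HB')].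
Qed.
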